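(* For all integers $2\le k\le n$, \[ \mathbb{P}_n(W_k\cap W_{k-1})=\frac{k}{n}-\frac{3}{2n}+\frac{(n-k+1)^2}{4n(n-1)}, \] i.e. this is the probability that both the $(k-1)$-th and $k$-th boundary steps of a uniformly random type-B permutation tableau of size $n$ are west steps.
   Context: A Ferrers diagram is a left-justified array of cells whose row lengths weakly decrease from top to bottom (rows of length $0$ are allowed). Its half-perimeter is the number of rows plus the number of columns. Its southeast boundary, traversed from the northeast corner to the southwest corner, consists of $n$ unit steps, each south or west; south steps correspond to rows and west steps to columns. We write $S_k$ (resp. $W_k$) for the event that the $k$-th step is south (resp. west). If the diagram has $c$ columns, the shifted Ferrers diagram is obtained by inserting $c$ new left-justified rows above it, of lengths $c,c-1,\dots,1$ from top to bottom; the rightmost cell of each inserted row is a diagonal cell. A type-B permutation tableau of size $n$ is a filling of a shifted Ferrers diagram of half-perimeter $n$ with $0$'s and $1$'s such that: (1) every column contains at least one $1$; (2) no $0$ has both a $1$ above it in its column and a $1$ to its left in its row; (3) if a diagonal cell contains $0$ then every cell of its row contains $0$. The boundary steps of the shifted diagram are those of the underlying Ferrers diagram. Let $\mathcal{B}_n$ be the set of such tableaux and $\mathbb{P}_n$ the uniform probability measure on $\mathcal{B}_n$. *)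

(* Defs.v *)
From mathcomp Require Import all_boot all_order all_algebra.
Set Implicit Arguments.
Unset Strict Implicit.
Unset Printing Implicit Defensive.
Import GRing.Theory Num.Theory.

(* Boundary word: w : seq bool, read from the NE corner to the SW corner;
   step i (0-based) is SOUTH iff  nth false w i = true, WEST iff false. *)

Definition ncols (w : seq bool) : nat := count negb w.

(* 0-based positions of the south steps (= rows of the Ferrers diagram,
   top to bottom) *)
Definition southpos (w : seq bool) : seq nat :=
  [seq i <- iota 0 (size w) | nth false w i].

(* Rows of the shifted diagram, indexed top to bottom by r = 0,1,...
   rows r < c (c = ncols w) are the inserted staircase rows; the row
   r = c + s is the s-th row of the underlying Ferrers diagram, whose
   length is the number of west steps after the corresponding south step.
   Staircase row r has length r+1 and its rightmost cell (column r) is its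
   diagonal cell. Columns are 0-based from the left. *)
Definition rowlen (w : seq bool) (r : nat) : nat :=
  let c := ncols w in
  if r < c then r.+1
  else if r - c < size (southpos w)
       then count negb (drop (nth 0 (southpos w) (r - c)).+1 w)
       else 0.

Definition inD (w : seq bool) (r j : nat) : bool := j < rowlen w r.

Definition isdiag (w : seq bool) (r j : nat) : bool := (r < ncols w) && (j == r).

(* A candidate tableau of size n: boundary word (n steps) and a 0/1 filling
   of 'I_n * 'I_n (true = 1); the shifted diagram has n rows and at most
   n columns, so it fits in 'I_n * 'I_n. *)
Definition cand (n : nat) := (n.-tuple bool * {ffun 'I_n * 'I_n -> bool})%type.

Definition is_typeB (n : nat) (t : cand n) : bool :=
  let w := tval t.1 in
  let f := t.2 in
  [&&
      [forall r : 'I_n, forall j : 'I_n, f (r, j) ==> inD w r j],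
      [forall j : 'I_n, (j < ncols w) ==> [exists r : 'I_n, inD w r j && f (r, j)]],
      [forall r : 'I_n, forall j : 'I_n,
         (inD w r j && ~~ f (r, j)) ==>
         ~~ ([exists r' : 'I_n, [&& r' < r, inD w r' j & f (r', j)]] &&
             [exists j' : 'I_n, [&& j' < j, inD w r j' & f (r, j')]])]
    &
      [forall r : 'I_n, forall j : 'I_n,
         (isdiag w r j && ~~ f (r, j)) ==>
         [forall j' : 'I_n, inD w r j' ==> ~~ f (r, j')]]].

Definition typeB (n : nat) : {set cand n} := [set t | is_typeB t].

Definition Pn (n : nat) (E : {set cand n}) : rat :=
  (#|E :&: typeB n|)%:R / (#|typeB n|)%:R.

Definition W (n k : nat) : {set cand n} :=
  [set t : cand n | ~~ nth false (tval t.1) k.-1].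

(* Main.v *)
Require Import Defs.
From mathcomp Require Import all_boot all_order all_algebra zify.
From Stdlib Require Import FunctionalExtensionality.
Import GRing.Theory Num.Theory.
Set Implicit Arguments. Unset Strict Implicit. Unset Printing Implicit Defensive.

Lemma ncols_rcons w b : ncols (rcons w b) = ncols w + ~~ b.
Proof. by rewrite /ncols -cats1 count_cat /= addn0. Qed.

Lemma southpos_rcons w b : southpos (rcons w b) =
  if b then rcons (southpos w) (size w) else southpos w.
Proof.
rewrite /southpos size_rcons -addn1 iotaD add0n /= filter_cat /=.
rewrite nth_rcons ltnn eqxx.
have -> : [seq i <- iota 0 (size w) | nth false (rcons w b) i] =
          [seq i <- iota 0 (size w) | nth false w i].
  apply: eq_in_filter => i; rewrite mem_iota add0n /= => hi.
  by rewrite nth_rcons hi.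
by case: b; rewrite ?cats1 ?cats0.
Qed.

Lemma southpos_lt w i : i \in southpos w -> i < size w.
Proof. by rewrite mem_filter mem_iota => /andP[_ /andP[_]]. Qed.

Lemma size_southpos w : size (southpos w) + ncols w = size w.
Proof.
elim/last_ind: w => [//|w b IH].
rewrite southpos_rcons ncols_rcons size_rcons; case: b; rewrite ?size_rcons /=; lia.
Qed.

Lemma ncols_le w : ncols w <= size w.
Proof. by rewrite /ncols count_size. Qed.

Lemma rowlen_rcons_true w r : rowlen (rcons w true) r = rowlen w r.
Proof.
rewrite /rowlen ncols_rcons addn0 southpos_rcons size_rcons.
case: ifP => // _.
set i := r - ncols w.
rewrite nth_rcons.
case: (ltnP i (size (southpos w))) => hi.
  rewrite ltnS ltnW //=.
  have hp : (nth 0 (southpos w) i) < size w by apply/southpos_lt/mem_nth.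
  by rewrite (drop_rcons hp) -cats1 count_cat /= !addn0.
case: ifP => [hi2|]; last by [].
have -> : i = size (southpos w) by lia.
by rewrite eqxx drop_oversize // size_rcons.
Qed.

Lemma rowlen_rcons_false0 w : rowlen (rcons w false) 0 = 1.
Proof. by rewrite /rowlen ncols_rcons addn1. Qed.

Lemma rowlen_rcons_falseS w r : rowlen (rcons w false) r.+1 =
  if r < size w then (rowlen w r).+1 else 0.
Proof.
rewrite /rowlen ncols_rcons addn1 ltnS southpos_rcons subSS.
have hs := size_southpos w.
case: (ltnP r (ncols w)) => hr.
  by have -> : r < size w by have := ncols_le w; lia.
case: (ltnP (r - ncols w) (size (southpos w))) => hi.
  have -> : r < size w by lia.
  have hp : (nth 0 (southpos w) (r - ncols w)) < size w by apply/southpos_lt/mem_nth.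
  by rewrite drop_rcons // -cats1 count_cat /= addn0 addn1.
by have -> : r < size w = false by lia.
Qed.

Lemma rowlen_le w r : rowlen w r <= maxn r.+1 (ncols w).
Proof.
rewrite /rowlen; case: ifP => h; first by rewrite leq_maxl.
case: ifP => _ //.
apply: leq_trans (leq_maxr _ _).
set k := (nth 0 (southpos w) (r - ncols w)).+1.
by rewrite /ncols -[in X in _ <= X](cat_take_drop k w) count_cat leq_addl.
Qed.

Lemma rowlen_out w r : size w <= r -> rowlen w r = 0.
Proof.
move=> h; rewrite /rowlen; have hs := size_southpos w.
by rewrite ifF ?ifF //; lia.
Qed.

Lemma inD_bound w r j : inD w r j -> r < size w /\ j < size w.
Proof.
rewrite /inD => h; case: (ltnP r (size w)) => hr.
  split => //; have := rowlen_le w r; have := ncols_le w; lia.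
by rewrite rowlen_out in h.
Qed.

Lemma inD_rcons_true w : inD (rcons w true) = inD w.
Proof. by apply: functional_extensionality => r; apply: functional_extensionality => j; rewrite /inD rowlen_rcons_true. Qed.

Lemma inD_rcons_false00 w j : inD (rcons w false) 0 j = (j == 0).
Proof. by rewrite /inD rowlen_rcons_false0; case: j. Qed.

Lemma inD_rcons_falseS w r j : inD (rcons w false) r.+1 j.+1 = inD w r j.
Proof.
rewrite /inD rowlen_rcons_falseS; case: ifP => h; first by rewrite ltnS.
by rewrite rowlen_out // leqNgt h.
Qed.

Lemma inD_rcons_falseS0 w r : inD (rcons w false) r.+1 0 = (r < size w).
Proof. by rewrite /inD rowlen_rcons_falseS; case: ifP. Qed.
Definition fn n (f : {ffun 'I_n * 'I_n -> bool}) (r j : nat) : bool :=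
  if (insub r : option 'I_n) is Some r' then
    (if (insub j : option 'I_n) is Some j' then f (r', j') else false)
  else false.

Definition mk n (h : nat -> nat -> bool) : {ffun 'I_n * 'I_n -> bool} :=
  [ffun p => h (val p.1) (val p.2)].

Lemma fnE n f (r j : 'I_n) : fn f r j = f (r, j).
Proof. by rewrite /fn !valK. Qed.

Lemma fn_out n f r j : ~~ ((r < n) && (j < n)) -> @fn n f r j = false.
Proof.
rewrite negb_and /fn => /orP[h|h].
  by rewrite insubF //; apply/negbTE.
case: insub => // a; by rewrite insubF //; apply/negbTE.
Qed.

Lemma fn_mk n h r j : fn (mk n h) r j = [&& r < n, j < n & h r j].
Proof.
case: (boolP ((r < n) && (j < n))) => [/andP[hr hj]|hn].
  by rewrite -[r]/(val (Ordinal hr)) -[j]/(val (Ordinal hj)) fnE ffunE /= hr hj.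
rewrite fn_out //; move: hn; by case: (r < n); case: (j < n).
Qed.

Lemma fn_inj n (f f' : {ffun 'I_n * 'I_n -> bool}) : fn f = fn f' -> f = f'.
Proof. by move=> h; apply/ffunP => -[r j]; rewrite -!fnE h. Qed.

Definition Pb n (w : seq bool) (f : {ffun 'I_n * 'I_n -> bool}) : bool :=
  [&& [forall r : 'I_n, forall j : 'I_n, f (r, j) ==> inD w r j],
      [forall j : 'I_n, (j < ncols w) ==> [exists r : 'I_n, inD w r j && f (r, j)]],
      [forall r : 'I_n, forall j : 'I_n,
         (inD w r j && ~~ f (r, j)) ==>
         ~~ ([exists r' : 'I_n, [&& r' < r, inD w r' j & f (r', j)]] &&
             [exists j' : 'I_n, [&& j' < j, inD w r j' & f (r, j')]])]
    & [forall r : 'I_n, forall j : 'I_n,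
         (isdiag w r j && ~~ f (r, j)) ==>
         [forall j' : 'I_n, inD w r j' ==> ~~ f (r, j')]]].

Lemma Pb_typeB n (t : cand n) : is_typeB t = @Pb n (tval t.1) t.2.
Proof. by []. Qed.

Definition Valid (w : seq bool) (g : nat -> nat -> bool) : Prop :=
  [/\ (forall r j, g r j -> inD w r j),
      (forall j, j < ncols w -> exists r, inD w r j && g r j),
      (forall r j, inD w r j -> ~~ g r j ->
          (exists r', [&& r' < r, inD w r' j & g r' j]) ->
          (exists j', [&& j' < j, inD w r j' & g r j']) -> False)
    & (forall r, r < ncols w -> ~~ g r r -> forall j, ~~ g r j)].

Lemma PbP n w (f : {ffun 'I_n * 'I_n -> bool}) : size w = n -> Pb w f <-> Valid w (fn f).
Proof.
move=> hn; split.
  case/and4P => /forallP h1 /forallP h2 /forallP h3 /forallP h4; split.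
  - move=> r j; case: (boolP ((r < n) && (j < n))) => [/andP[hr hj]|hb]; last by rewrite fn_out.
    rewrite -[r]/(val (Ordinal hr)) -[j]/(val (Ordinal hj)) fnE.
    by move/forallP: (h1 (Ordinal hr)) => /(_ (Ordinal hj)) /implyP.
  - move=> j hj; have hjn : j < n by rewrite -hn; apply: leq_trans hj (ncols_le w).
    move/implyP: (h2 (Ordinal hjn)) => /(_ hj) /existsP[r /andP[a b]].
    by exists r; rewrite a -[j]/(val (Ordinal hjn)) fnE.
  - move=> r j hin hg [r' /and3P[hr' hin' hg']] [j' /and3P[hj' hinj' hgj']].
    have [hr hj] := inD_bound hin; rewrite hn in hr hj.
    have hr'n : r' < n by apply: ltn_trans hr.
    have hj'n : j' < n by apply: ltn_trans hj.
    move/forallP: (h3 (Ordinal hr)) => /(_ (Ordinal hj)) /implyP.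
    rewrite -[r]/(val (Ordinal hr)) -[j]/(val (Ordinal hj)) fnE in hg.
    rewrite hin hg => /(_ isT) /negP; apply; apply/andP; split.
      apply/existsP; exists (Ordinal hr'n); rewrite /= hr' hin' /=.
      by rewrite -[r']/(val (Ordinal hr'n)) -[j]/(val (Ordinal hj)) fnE in hg'.
    apply/existsP; exists (Ordinal hj'n); rewrite /= hj' hinj' /=.
    by rewrite -[r]/(val (Ordinal hr)) -[j']/(val (Ordinal hj'n)) fnE in hgj'.
  - move=> r hr hg j; case: (boolP ((r < n) && (j < n))) => [/andP[hrn hj]|hb]; last by rewrite fn_out.
    rewrite -[r]/(val (Ordinal hrn)) -[j]/(val (Ordinal hj)) fnE.
    rewrite -[r]/(val (Ordinal hrn)) fnE in hg.
    move/forallP: (h4 (Ordinal hrn)) => /(_ (Ordinal hrn)) /implyP.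
    rewrite /isdiag /= hr eqxx hg => /(_ isT) /forallP /(_ (Ordinal hj)) /implyP.
    case: (boolP (inD w r j)) => [hi|hi]; first by move/(_ isT).
    move=> _; apply/negP => hf.
    move/forallP: (h1 (Ordinal hrn)) => /(_ (Ordinal hj)) /implyP /(_ hf).
    by rewrite (negbTE hi).
case=> h1 h2 h3 h4; apply/and4P; split.
- apply/forallP => r; apply/forallP => j; apply/implyP => hf.
  by apply: h1; rewrite fnE.
- apply/forallP => j; apply/implyP => hj; have [r /andP[a b]] := h2 _ hj.
  have [hr _] := inD_bound a; rewrite hn in hr.
  apply/existsP; exists (Ordinal hr); rewrite a /=.
  by rewrite -[r]/(val (Ordinal hr)) fnE in b.
- apply/forallP => r; apply/forallP => j; apply/implyP => /andP[hin hg].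
  apply/negP => /andP[/existsP[r' /and3P[a b c]] /existsP[j' /and3P[d e g]]].
  apply: (h3 r j hin); first by rewrite fnE.
    by exists r'; rewrite a b fnE.
  by exists j'; rewrite d e fnE.
- apply/forallP => r; apply/forallP => j; apply/implyP => /andP[/andP[hr /eqP hjr] hg].
  apply/forallP => j'; apply/implyP => _.
  rewrite -fnE; apply: h4 => //.
  by move: hg; rewrite -fnE hjr.
Qed.

Definition restrb n w (g : nat -> nat -> bool) r : bool :=
  has (fun j => [&& inD w r j, ~~ g r j & has (fun r' => inD w r' j && g r' j) (iota 0 r)]) (iota 0 n)
  || ((r < ncols w) && ~~ g r r).

Definition ust n w g := count (fun r => ~~ restrb n w g r) (iota 0 n).

Lemma Valid_S w g : Valid (rcons w true) g <-> Valid w g.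
Proof. by rewrite /Valid inD_rcons_true ncols_rcons addn0. Qed.

Lemma iotaS0 n : iota 0 n.+1 = 0 :: map succn (iota 0 n).
Proof. by rewrite /= -[1]/(1 + 0) iotaDl. Qed.

Lemma iotaSr n : iota 0 n.+1 = rcons (iota 0 n) n.
Proof. by rewrite -addn1 iotaD add0n cats1. Qed.

Lemma ust_S w g : ust (size w).+1 (rcons w true) g = (ust (size w) w g).+1.
Proof.
rewrite /ust /restrb inD_rcons_true ncols_rcons addn0 iotaSr -cats1 count_cat /=.
rewrite addn0 -[RHS]addn1; congr (_ + _).
  apply: eq_in_count => r; rewrite mem_iota add0n => /andP[_ hr].
  rewrite has_cat /= orbF.
  case: (boolP (inD w r (size w))) => [h|]; last by rewrite andFb orbF.
  by have [_] := inD_bound h; rewrite ltnn.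
rewrite (_ : has _ _ = false); last first.
  apply/hasP => -[j _ /and3P[h _ _]]; have [] := inD_bound h; by rewrite ltnn.
by rewrite orFb ltnNge ncols_le.
Qed.

Definition Gcol (g : nat -> nat -> bool) (c : nat -> bool) (r j : nat) : bool :=
  if j is j'.+1 then (if r is r'.+1 then g r' j' else false) else c r.

Lemma restrb_intro1 w g r j r' : j < size w -> inD w r j -> ~~ g r j -> r' < r ->
   inD w r' j -> g r' j -> restrb (size w) w g r.
Proof.
move=> hj a b c d e; apply/orP; left; apply/hasP; exists j; first by rewrite mem_iota.
rewrite a b /=; apply/hasP; exists r'; first by rewrite mem_iota.
by rewrite d e.
Qed.

Lemma restrb_elim w g r : restrb (size w) w g r ->
  (exists j r', [/\ inD w r j, ~~ g r j, r' < r, inD w r' j & g r' j])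
  \/ (r < ncols w /\ ~~ g r r).
Proof.
case/orP => [/hasP[j _ /and3P[a b /hasP[r' hr' /andP[c d]]]]|/andP[a b]].
  left; exists j, r'; split => //; by move: hr'; rewrite mem_iota.
by right.
Qed.

Lemma inD_W0 w r : inD (rcons w false) r 0 = (r <= size w).
Proof. by case: r => [|r]; rewrite ?inD_rcons_false00 ?inD_rcons_falseS0. Qed.

Lemma inD_W0S w j : inD (rcons w false) 0 j.+1 = false.
Proof. by rewrite inD_rcons_false00. Qed.

Lemma Valid_W_intro w g c :
  Valid w g -> (forall r, r < size w -> restrb (size w) w g r -> ~~ c r.+1) ->
  has c (iota 0 (size w).+1) -> (forall r, size w < r -> ~~ c r) ->
  Valid (rcons w false) (Gcol g c).
Proof.
case=> h1 h2 h3 h4 hr hc hout; split.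
- move=> [|r] [|j] /=.
  + by rewrite inD_W0.
  + by [].
  + move=> hcr; rewrite inD_W0; case: (ltnP (size w) r.+1) => // hlt.
    by move: (hout _ hlt); rewrite hcr.
  + by rewrite inD_rcons_falseS; apply: h1.
- move=> [|j]; rewrite ncols_rcons addn1 => hj.
    move/hasP: hc => [r hr' hcr]; exists r; rewrite inD_W0 /= hcr andbT.
    by move: hr'; rewrite mem_iota add0n ltnS.
  have [r /andP[a b]] := h2 _ hj; exists r.+1.
  by rewrite inD_rcons_falseS a.
- move=> [|r] [|j] /=; first (by move=> _ _ []); first by rewrite inD_W0S.
    by move=> _ _ _ [].
  rewrite inD_rcons_falseS => hin hg [[|r'] /and3P[hr' hin' hg']]; first by rewrite inD_W0S in hin'.
  rewrite inD_rcons_falseS /= ltnS in hin' hg' hr'.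
  move=> [[|j'] /and3P[hj' hinj' hgj']] /=.
    have [hrn hjn] := inD_bound hin.
    move/negP: (hr r hrn (restrb_intro1 hjn hin hg hr' hin' hg')).
    by rewrite /= in hgj'.
  rewrite inD_rcons_falseS /= ltnS in hinj' hgj' hj'.
  apply: (h3 r j hin hg); first by exists r'; rewrite hr' hin' hg'.
  by exists j'; rewrite hj' hinj' hgj'.
- move=> [|r]; rewrite ncols_rcons addn1 ?ltnS /= => hrc hg.
    by move=> [|j].
  move=> [|j] /=; last by apply: h4.
  apply: hr; first by apply: leq_trans hrc (ncols_le w).
  by apply/orP; right; rewrite hrc hg.
Qed.

Lemma Valid_W_elim w g : Valid (rcons w false) g ->
  [/\ Valid w (fun r j => g r.+1 j.+1),
      (forall r, r < size w -> restrb (size w) w (fun r j => g r.+1 j.+1) r -> ~~ g r.+1 0),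
      has (fun r => g r 0) (iota 0 (size w).+1)
    & g = Gcol (fun r j => g r.+1 j.+1) (fun r => g r 0)].
Proof.
case=> h1 h2 h3 h4; split.
- split.
  + by move=> r j /h1; rewrite inD_rcons_falseS.
  + move=> j hj; have := h2 j.+1; rewrite ncols_rcons addn1 ltnS => /(_ hj).
    move=> [[|r] /andP[a b]]; first by rewrite inD_W0S in a.
    by exists r; rewrite -inD_rcons_falseS a.
  + move=> r j hin hg [r' /and3P[a b c]] [j' /and3P[d e f]].
    apply: (h3 r.+1 j.+1); rewrite ?inD_rcons_falseS //.
      by exists r'.+1; rewrite ltnS a inD_rcons_falseS b c.
    by exists j'.+1; rewrite ltnS d inD_rcons_falseS e f.
  + move=> r hr hg j; apply: (h4 r.+1) => //.
    by rewrite ncols_rcons addn1 ltnS.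
- move=> r hr /restrb_elim [[j [r' [a b c d e]]]|[a b]].
    apply/negP => hg0; apply: (h3 r.+1 j.+1); rewrite ?inD_rcons_falseS //.
      by exists r'.+1; rewrite ltnS c inD_rcons_falseS d e.
    by exists 0; rewrite inD_W0 hr hg0.
  by apply: (h4 r.+1) => //; rewrite ncols_rcons addn1 ltnS.
- have := h2 0; rewrite ncols_rcons addn1 => /(_ isT) [r /andP[a b]].
  apply/hasP; exists r => //; rewrite mem_iota add0n ltnS.
  by rewrite -inD_W0.
- apply: functional_extensionality => r; apply: functional_extensionality => j.
  case: j => [|j] //; case: r => [|r] //=.
  by apply/negP => /h1; rewrite inD_W0S.
Qed.

Lemma has_iotaS (p : pred nat) n : has p (iota 0 n.+1) = p 0 || has (fun i => p i.+1) (iota 0 n).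
Proof. by rewrite iotaS0 /= has_map. Qed.

Lemma restrb_WS w g c r : r < size w ->
  restrb (size w).+1 (rcons w false) (Gcol g c) r.+1 =
  (~~ c r.+1 && has c (iota 0 r.+1)) || restrb (size w) w g r.
Proof.
move=> hr; rewrite [LHS]/restrb has_iotaS ncols_rcons addn1 ltnS.
rewrite inD_rcons_falseS0 hr.
have -> : has (fun r' => inD (rcons w false) r' 0 && Gcol g c r' 0) (iota 0 r.+1) = has c (iota 0 r.+1).
  apply: eq_in_has => r'; rewrite mem_iota add0n ltnS => hr'.
  by rewrite inD_W0 (leq_trans hr' (ltnW hr)).
set B := has _ (iota 0 (size w)).
have -> : B = has (fun j => [&& inD w r j, ~~ g r j
           & has (fun r' => inD w r' j && g r' j) (iota 0 r)]) (iota 0 (size w)).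
  apply: eq_in_has => j _; rewrite inD_rcons_falseS has_iotaS inD_W0S /=.
  congr [&& _, _ & _]; apply: eq_in_has => r' _; by rewrite inD_rcons_falseS.
by rewrite /restrb !orbA.
Qed.

Lemma ust_W w g c : ust (size w).+1 (rcons w false) (Gcol g c) =
  c 0 + count (fun r => ~~ restrb (size w) w g r && (c r.+1 || ~~ has c (iota 0 r.+1)))
                (iota 0 (size w)).
Proof.
rewrite /ust [in LHS]iotaS0 [count _ (_ :: _)]/= count_map; congr (_ + _).
  rewrite /restrb ncols_rcons addn1 /= !andbF /=.
  rewrite (_ : has _ _ = false) ?orFb ?negbK //.
  by apply/hasP => -[j _]; rewrite !andbF.
apply: eq_in_count => r; rewrite mem_iota add0n => /andP[_ hr].
rewrite -[LHS]/(~~ restrb (size w).+1 (rcons w false) (Gcol g c) r.+1).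
by rewrite restrb_WS //; case: (c r.+1); case: has; case: restrb.
Qed.

Lemma sum_transfer (A B : finType) (PA : pred A) (PB : pred B) (h : A -> B) (F : B -> nat) :
  injective h -> (forall a, PA a -> PB (h a)) -> (forall b, PB b -> exists2 a, PA a & h a = b) ->
  \sum_(b | PB b) F b = \sum_(a | PA a) F (h a).
Proof.
move=> hi h1 h2.
have -> : \sum_(a | PA a) F (h a) = \sum_(a in [set a | PA a]) F (h a).
  by apply: eq_bigl => a; rewrite inE.
rewrite -(big_imset _ (in2W hi)) /=; apply: eq_bigl => b.
apply/idP/imsetP.
  by move=> /h2 [a ha <-]; exists a; rewrite ?inE.
by move=> [a]; rewrite inE => ha ->; apply: h1.
Qed.

Definition fc m (col : {ffun 'I_m -> bool}) (r : nat) : bool :=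
  if (insub r : option 'I_m) is Some i then col i else false.

Lemma fcE m col (i : 'I_m) : fc col i = col i.
Proof. by rewrite /fc valK. Qed.

Lemma fc_out m col r : m <= r -> @fc m col r = false.
Proof. by move=> h; rewrite /fc insubF // ltnNge h. Qed.

Lemma fc_inj m (c1 c2 : {ffun 'I_m -> bool}) : fc c1 = fc c2 -> c1 = c2.
Proof. by move=> h; apply/ffunP => i; rewrite -!fcE h. Qed.

Definition cons_fn (b : bool) (c : nat -> bool) (r : nat) : bool :=
  if r is r'.+1 then c r' else b.

Lemma sum_ffun_cons m (F : (nat -> bool) -> nat) :
  \sum_(col : {ffun 'I_m.+1 -> bool}) F (fc col) =
  \sum_(b : bool) \sum_(col : {ffun 'I_m -> bool}) F (cons_fn b (fc col)).
Proof.
pose h := fun p : bool * {ffun 'I_m -> bool} =>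
  [ffun i : 'I_m.+1 => cons_fn p.1 (fc p.2) i].
have fch : forall p, fc (h p) = cons_fn p.1 (fc p.2).
  move=> p; apply: functional_extensionality => r.
  case: (ltnP r m.+1) => hr.
    by rewrite -[r]/(val (Ordinal hr)) fcE ffunE.
  rewrite fc_out //; case: r hr => [|r] //= hr.
  by rewrite fc_out.
rewrite (@sum_transfer _ _ predT predT h (fun c => F (fc c))) //.
- rewrite pair_big; apply: eq_big => [p|[b c] _] //.
  by rewrite fch.
- move=> p q hpq; have := congr1 (@fc m.+1) hpq; rewrite !fch => e.
  have e0 := congr1 (fun f => f 0) e; have eS := congr1 (fun f => fun r => f r.+1) e.
  simpl in e0, eS.
  by clear hpq e; case: p q e0 eS => [b c] [b' c'] /= -> /fc_inj ->.
move=> b _; exists (fc b 0, [ffun i : 'I_m => fc b i.+1]) => //.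
apply: fc_inj; rewrite fch; apply: functional_extensionality => -[|r] //=.
case: (ltnP r m) => hr.
  by rewrite -[r]/(val (Ordinal hr)) fcE ffunE.
by rewrite !fc_out.
Qed.

Definition Kst (t m : nat) (rho : nat -> bool) (seen : bool) : nat :=
  \sum_(col : {ffun 'I_m -> bool})
     (if all (fun r => rho r ==> ~~ fc col r) (iota 0 m)
      then t ^ count (fun r => ~~ rho r && (fc col r || ~~ (seen || has (fc col) (iota 0 r)))) (iota 0 m)
      else 0).

Definition Ucnt m (rho : nat -> bool) := count (fun r => ~~ rho r) (iota 0 m).

Lemma all_iotaS (p : pred nat) n : all p (iota 0 n.+1) = p 0 && all (fun i => p i.+1) (iota 0 n).
Proof. by rewrite iotaS0 /= all_map. Qed.

Lemma count_iotaS (p : pred nat) n : count p (iota 0 n.+1) = p 0 + count (fun i => p i.+1) (iota 0 n).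
Proof. by rewrite iotaS0 /= count_map. Qed.

Lemma Kst_step t m rho seen : Kst t m.+1 rho seen =
  \sum_(b : bool) (if rho 0 ==> ~~ b
                   then t ^ (~~ rho 0 && (b || ~~ seen)) * Kst t m (fun r => rho r.+1) (seen || b)
                   else 0).
Proof.
rewrite /Kst (@sum_ffun_cons m (fun c => if all (fun r => rho r ==> ~~ c r) (iota 0 m.+1)
      then t ^ count (fun r => ~~ rho r && (c r || ~~ (seen || has c (iota 0 r)))) (iota 0 m.+1)
      else 0)).
apply: eq_bigr => b _.
case: ifP => hb; last first.
  apply: big1 => c _; by rewrite all_iotaS /= hb.
rewrite big_distrr; apply: eq_bigr => c _.
rewrite all_iotaS count_iotaS.
rewrite [X in X && _](_ : _ = true) //.
rewrite andTb.
have -> : all (fun i => rho i.+1 ==> ~~ cons_fn b (fc c) i.+1) (iota 0 m) = all (fun r => rho r.+1 ==> ~~ fc c r) (iota 0 m) by [].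
case: ifP => _; last by rewrite /= muln0.
rewrite expnD; congr (_ * _); first by rewrite /= orbF.
congr (_ ^ _); apply: eq_count => r; rewrite has_iotaS.
by case: (seen); case: (b).
Qed.

Lemma Ucnt_step m rho : Ucnt m.+1 rho = ~~ rho 0 + Ucnt m (fun r => rho r.+1).
Proof. by rewrite /Ucnt count_iotaS. Qed.

Lemma Kst_true t m rho : Kst t m rho true = (t + 1) ^ Ucnt m rho.
Proof.
elim: m rho => [|m IH] rho.
  rewrite /Kst /Ucnt /= (eq_bigr (fun _ => 1)) // sum1_card card_ffun card_ord.
  by rewrite card_bool.
rewrite Kst_step big_bool /= !IH Ucnt_step.
by case: (rho 0) => /=; rewrite ?expn0 ?expn1 ?mul1n ?addn0 ?add0n ?expnS; lia.
Qed.

Lemma Kst_false t m rho : Kst t m rho false + t ^ (Ucnt m rho).+1 =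
   t * (t + 1) ^ Ucnt m rho + t ^ Ucnt m rho.
Proof.
elim: m rho => [|m IH] rho.
  rewrite /Kst /Ucnt /= (eq_bigr (fun _ => 1)) // sum1_card card_ffun card_ord.
  by rewrite card_bool /= expn1 expn0; lia.
rewrite Kst_step big_bool /= Kst_true Ucnt_step.
have := IH (fun r => rho r.+1).
case: (rho 0) => /=; rewrite ?add0n ?add1n ?expn0 ?expn1 ?mul1n => h.
  by [].
move: h; rewrite !expnS.
move: (Kst _ _ _ _) ((t + 1) ^ _) (t ^ _) => K P Q h; nia.
Qed.

Lemma fc0 m : fc [ffun _ : 'I_m => false] = fun _ => false.
Proof.
apply: functional_extensionality => r; rewrite /fc.
by case: insub => // i; rewrite ffunE.
Qed.

Lemma Kst_split t n rho :
  \sum_(c : {ffun 'I_n -> bool})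
     (if all (fun r => rho r ==> ~~ fc c r) (iota 0 n) && has (fc c) (iota 0 n)
      then t ^ count (fun r => ~~ rho r && (fc c r || ~~ (false || has (fc c) (iota 0 r)))) (iota 0 n)
      else 0) + t ^ Ucnt n rho = Kst t n rho false.
Proof.
pose X (c : {ffun 'I_n -> bool}) :=
  t ^ count (fun r => ~~ rho r && (fc c r || ~~ (false || has (fc c) (iota 0 r)))) (iota 0 n).
have -> : t ^ Ucnt n rho = \sum_(c : {ffun 'I_n -> bool})
     (if all (fun r => rho r ==> ~~ fc c r) (iota 0 n) && ~~ has (fc c) (iota 0 n)
      then X c else 0).
  rewrite (bigD1 [ffun _ => false]) //= big1 ?addn0.
    rewrite /X fc0 (_ : all _ _ = true); last by apply/allP => r _; rewrite implybT.
    rewrite has_pred0 /=; congr (_ ^ _); apply: eq_count => r.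
    by rewrite has_pred0 /= andbT.
  move=> c hc; case: ifP => // /andP[_ /negP []].
  have [i hi] : exists i, c i != false.
    apply/existsP; apply: contraR hc => /existsP hn; apply/eqP/ffunP => i.
    rewrite ffunE; apply/negP => hci; apply: hn; exists i; by rewrite hci.
  apply/hasP; exists (val i); first by rewrite mem_iota /=.
  by rewrite fcE; move: hi; case: (c i).
rewrite -big_split /=; apply: eq_bigr => c _.
rewrite /X; case: (all _ _); case: (has (fc c) (iota 0 n)) => /=; by rewrite ?addn0.
Qed.

Lemma colsum t n rho :
  \sum_(col : {ffun 'I_n.+1 -> bool} | all (fun r => rho r ==> ~~ fc col r.+1) (iota 0 n)
                                        && has (fc col) (iota 0 n.+1))
     t ^ (fc col 0 + count (fun r => ~~ rho r && (fc col r.+1 || ~~ has (fc col) (iota 0 r.+1))) (iota 0 n))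
  + t ^ (Ucnt n rho).+1 = 2 * t * (t + 1) ^ Ucnt n rho.
Proof.
rewrite big_mkcond (@sum_ffun_cons n (fun c => if all (fun r => rho r ==> ~~ c r.+1) (iota 0 n) && has c (iota 0 n.+1) then t ^ (c 0 + count (fun r => ~~ rho r && (c r.+1 || ~~ has c (iota 0 r.+1))) (iota 0 n)) else 0)) big_bool.
have -> : \sum_(c : {ffun 'I_n -> bool}) (if all (fun r => rho r ==> ~~ cons_fn true (fc c) r.+1) (iota 0 n) && has (cons_fn true (fc c)) (iota 0 n.+1) then t ^ (cons_fn true (fc c) 0 + count (fun r => ~~ rho r && (cons_fn true (fc c) r.+1 || ~~ has (cons_fn true (fc c)) (iota 0 r.+1))) (iota 0 n)) else 0)
   = t * Kst t n rho true.
  rewrite /Kst big_distrr; apply: eq_bigr => c _.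
  rewrite has_iotaS orTb andbT.
  case: ifP => _; last by rewrite /= muln0.
  rewrite expnD expn1; congr (_ * (_ ^ _)).
have -> : \sum_(c : {ffun 'I_n -> bool}) (if all (fun r => rho r ==> ~~ cons_fn false (fc c) r.+1) (iota 0 n) && has (cons_fn false (fc c)) (iota 0 n.+1) then t ^ (cons_fn false (fc c) 0 + count (fun r => ~~ rho r && (cons_fn false (fc c) r.+1 || ~~ has (cons_fn false (fc c)) (iota 0 r.+1))) (iota 0 n)) else 0)
   = \sum_(c : {ffun 'I_n -> bool})
     (if all (fun r => rho r ==> ~~ fc c r) (iota 0 n) && has (fc c) (iota 0 n)
      then t ^ count (fun r => ~~ rho r && (fc c r || ~~ (false || has (fc c) (iota 0 r)))) (iota 0 n)
      else 0).
  apply: eq_bigr => c _; rewrite has_iotaS orFb.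
  case: ifP => // _; rewrite add0n; congr (_ ^ _); apply: eq_count => r.
  by rewrite has_iotaS.
have h1 := Kst_split t n rho.
have h2 := Kst_false t n rho.
rewrite Kst_true; move: h1 h2.
move: (\sum_(c : {ffun 'I_n -> bool}) _) (Kst _ _ _ _) ((t + 1) ^ Ucnt n rho) (t ^ Ucnt n rho) => A K P Q.
rewrite /= expnS => h1 h2; nia.
Qed.

Definition Gs n (w : seq bool) (t : nat) : nat :=
  \sum_(f : {ffun 'I_n * 'I_n -> bool} | Pb w f) t ^ ust n w (fn f).

Lemma fn_ext n (f : {ffun 'I_n * 'I_n -> bool}) : fn (mk n.+1 (fn f)) = fn f.
Proof.
apply: functional_extensionality => r; apply: functional_extensionality => j.
rewrite fn_mk; case: (ltnP r n.+1) => hr; case: (ltnP j n.+1) => hj //=;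
  rewrite fn_out //; apply/negP => /andP[a b]; lia.
Qed.

Lemma G_S w t : Gs (size w).+1 (rcons w true) t = t * Gs (size w) w t.
Proof.
rewrite /Gs (@sum_transfer _ _ (fun f : {ffun 'I_(size w) * 'I_(size w) -> bool} => Pb w f)
   (fun f => Pb (rcons w true) f) (fun f => mk (size w).+1 (fn f))).
- rewrite big_distrr; apply: eq_bigr => f _; by rewrite fn_ext ust_S expnS.
- by move=> f g /(congr1 (@fn (size w).+1)); rewrite !fn_ext => /fn_inj.
- move=> f /(PbP f (erefl _)) hv; apply/(PbP _ (size_rcons _ _)).
  by rewrite fn_ext; apply/Valid_S.
move=> b /(PbP b (size_rcons _ _)) /Valid_S hv.
have e : fn (mk (size w) (fn b)) = fn b.
  apply: functional_extensionality => r; apply: functional_extensionality => j.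
  rewrite fn_mk; case: (boolP (fn b r j)) => [h|]; last by rewrite !andbF.
  by case: hv => hs _ _ _; have [-> ->] := inD_bound (hs _ _ h).
exists (mk (size w) (fn b)).
  by apply/(PbP _ (erefl _)); rewrite e.
by apply: fn_inj; rewrite fn_ext e.
Qed.

Lemma G_W w t : Gs (size w).+1 (rcons w false) t + t * Gs (size w) w t =
                2 * t * Gs (size w) w t.+1.
Proof.
pose n := size w.
pose colb (g : nat -> nat -> bool) (c : nat -> bool) :=
  all (fun r => restrb n w g r ==> ~~ c r.+1) (iota 0 n) && has c (iota 0 n.+1).
pose h := fun p : {ffun 'I_n * 'I_n -> bool} * {ffun 'I_n.+1 -> bool} =>
  mk n.+1 (Gcol (fn p.1) (fc p.2)).
have fnh : forall p, fn (h p) = Gcol (fn p.1) (fc p.2).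
  move=> p; apply: functional_extensionality => r; apply: functional_extensionality => j.
  rewrite fn_mk; case: j => [|j]; case: r => [|r] /=.
  - by [].
  - case: (ltnP r.+1 n.+1) => hr //=; by rewrite fc_out.
  - by rewrite !andbF.
  - rewrite !ltnS; case: (ltnP r n) => hr; case: (ltnP j n) => hj //=;
    rewrite fn_out //; apply/negP => /andP[a b]; lia.
rewrite /Gs (@sum_transfer _ _ (fun p => Pb w p.1 && colb (fn p.1) (fc p.2))
   (fun f => Pb (rcons w false) f) h).
- have -> : \sum_(p | Pb w p.1 && colb (fn p.1) (fc p.2))
              t ^ ust (size w).+1 (rcons w false) (fn (h p)) =
            \sum_(f : {ffun 'I_n * 'I_n -> bool} | Pb w f) \sum_(c : {ffun 'I_n.+1 -> bool} | colb (fn f) (fc c))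
              t ^ (fc c 0 + count (fun r => ~~ restrb n w (fn f) r &&
                     (fc c r.+1 || ~~ has (fc c) (iota 0 r.+1))) (iota 0 n)).
    rewrite pair_big_dep; apply: eq_bigr => p _.
    by rewrite fnh ust_W.
  rewrite big_distrr -big_split big_distrr; apply: eq_bigr => f _.
  have := colsum t n (restrb n w (fn f)).
  by rewrite expnS addn1; apply.
- move=> p q hpq; have := congr1 (@fn n.+1) hpq; rewrite !fnh => e.
  have e1 : fn p.1 = fn q.1.
    apply: functional_extensionality => r; apply: functional_extensionality => j.
    exact: (congr1 (fun F => F r.+1 j.+1) e).
  have e2 : fc p.2 = fc q.2.
    apply: functional_extensionality => r.
    exact: (congr1 (fun F => F r 0) e).
  clear hpq e; case: p q e1 e2 => [f c] [f' c'] /= /fn_inj -> /fc_inj -> //.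
- move=> [f c] /= /andP[/(PbP f (erefl _)) hv /andP[ha hh]].
  apply/(PbP _ (size_rcons _ _)); rewrite fnh /=.
  apply: Valid_W_intro => //.
    by move=> r hr; move/allP: ha => /(_ r); rewrite mem_iota add0n hr => /(_ isT) /implyP.
  by move=> r hr; rewrite fc_out.
move=> b /(PbP b (size_rcons _ _)) /Valid_W_elim [hv hres hhas heq].
have e1 : fn (mk n (fun r j => fn b r.+1 j.+1)) = (fun r j => fn b r.+1 j.+1).
  apply: functional_extensionality => r; apply: functional_extensionality => j.
  rewrite fn_mk; case: (boolP (fn b r.+1 j.+1)) => [hg|]; last by rewrite !andbF.
  by case: hv => hs _ _ _; have [-> ->] := inD_bound (hs _ _ hg).
have e2 : fc [ffun i : 'I_n.+1 => fn b i 0] = (fun r => fn b r 0).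
  apply: functional_extensionality => r; case: (ltnP r n.+1) => hr.
    by rewrite -[r]/(val (Ordinal hr)) fcE ffunE.
  by rewrite fc_out // fn_out // negb_and -leqNgt hr.
exists (mk n (fun r j => fn b r.+1 j.+1), [ffun i : 'I_n.+1 => fn b i 0]).
  rewrite /= e1 e2; apply/andP; split; first by apply/(PbP _ (erefl _)); rewrite e1.
  apply/andP; split => //; apply/allP => r; rewrite mem_iota add0n => /andP[_ hr].
  by apply/implyP; apply: hres.
by apply: fn_inj; rewrite fnh /= e1 e2 -heq.
Qed.

Lemma G_nil t : Gs 0 [::] t = 1.
Proof.
rewrite /Gs /ust /= (eq_bigr (fun _ => 1)) // (eq_bigl predT).
  by rewrite sum1_card card_ffun card_prod card_ord.
move=> f; apply/and4P; split; apply/forallP => -[] //.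
Qed.

Fixpoint allw (n : nat) : seq (seq bool) :=
  if n is n'.+1 then [seq rcons s b | s <- allw n', b <- [:: true; false]] else [:: [::]].

Lemma mem_allw n s : (s \in allw n) = (size s == n).
Proof.
elim: n s => [|n IH] s; first by case: s.
apply/allpairsP/idP => [[[s' b] [hs hb ->]]|].
  by move: hs; rewrite /= IH size_rcons eqSS.
case/lastP: s => [//|s' b]; rewrite size_rcons eqSS => hs.
by exists (s', b); rewrite /= IH hs; case: b.
Qed.

Lemma uniq_allw n : uniq (allw n).
Proof.
elim: n => [//|n IH].
change (uniq [seq rcons s b | s <- allw n, b <- [:: true; false]]).
apply: allpairs_uniq => //.
by move=> [s b] [s' b'] _ _ /= /rcons_inj.
Qed.

Lemma sum_tuples n (F : seq bool -> nat) :
  \sum_(w : n.-tuple bool) F (tval w) = \sum_(s <- allw n) F s.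
Proof.
rewrite -big_enum -(big_map val predT F).
apply: perm_big; apply: uniq_perm.
- by rewrite map_inj_uniq ?enum_uniq //; apply: val_inj.
- exact: uniq_allw.
move=> s; rewrite mem_allw; apply/mapP/idP => [[w _ ->]|hs].
  by rewrite size_tuple.
by exists (Tuple hs); rewrite ?mem_enum.
Qed.

Lemma sum_allwS n (F : seq bool -> nat) :
  \sum_(s <- allw n.+1) F s = \sum_(s <- allw n) (F (rcons s true) + F (rcons s false)).
Proof.
rewrite -[allw n.+1]/[seq rcons s b | s <- allw n, b <- [:: true; false]].
rewrite big_allpairs_dep; apply: eq_bigr => s _.
by rewrite big_cons big_cons big_nil /= addn0.
Qed.

Definition rf (t n : nat) : nat := \prod_(i < n) (t + i).

Lemma rfS t n : rf t n.+1 = t * rf t.+1 n.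
Proof.
rewrite /rf big_ord_recl addn0; congr (_ * _); apply: eq_bigr => i _.
by rewrite lift0 addSnnS.
Qed.

Lemma rfSr t n : rf t n.+1 = rf t n * (t + n).
Proof. by rewrite /rf big_ord_recr. Qed.

Lemma sumG n t : \sum_(s <- allw n) Gs n s t = 2 ^ n * rf t n.
Proof.
elim: n t => [|n IH] t; first by rewrite big_cons big_nil G_nil /rf big_ord0.
rewrite sum_allwS big_seq (eq_bigr (fun s => 2 * t * Gs n s t.+1)); last first.
  move=> s; rewrite mem_allw => /eqP <-.
  by rewrite G_S -G_W addnC.
rewrite -big_seq -big_distrr IH rfS expnS /=.
move: (2 ^ n) (rf t.+1 n) => a b; nia.
Qed.

Definition Hev n d t := \sum_(s <- allw n)
   (if ~~ nth false s d && ~~ nth false s d.+1 then Gs n s t else 0).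

Lemma Hev_step m d t : Hev (d.+2 + m).+1 d t = 2 * t * Hev (d.+2 + m) d t.+1.
Proof.
rewrite /Hev sum_allwS big_distrr !big_seq; apply: eq_bigr => s.
rewrite mem_allw => /eqP hs.
rewrite !nth_rcons hs !ltn_addr //.
case: ifP => _; last by rewrite /= muln0.
by rewrite /= -hs G_S -G_W addnC.
Qed.

Lemma Hev_iter m d t : Hev (d.+2 + m) d t = 2 ^ m * rf t m * Hev d.+2 d (t + m).
Proof.
elim: m t => [|m IH] t; first by rewrite !addn0 /rf big_ord0 mul1n.
rewrite addnS Hev_step IH rfS expnS addSnnS.
move: (2 ^ m) (rf t.+1 m) (Hev _ _ _) => a b c; nia.
Qed.

Lemma Hev_base d t : Hev d.+2 d t = \sum_(s <- allw d) Gs d.+2 (rcons (rcons s false) false) t.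
Proof.
rewrite /Hev sum_allwS.
transitivity (\sum_(s <- allw d.+1) (if ~~ nth false s d then Gs d.+2 (rcons s false) t else 0)).
  rewrite !big_seq; apply: eq_bigr => s; rewrite mem_allw => /eqP hs.
  rewrite !nth_rcons hs ltnSn eqxx ltnn /=.
  by case: (nth false s d).
rewrite sum_allwS !big_seq; apply: eq_bigr => s; rewrite mem_allw => /eqP hs.
by rewrite !nth_rcons hs ltnn eqxx /=.
Qed.

Lemma sumY d x : \sum_(s <- allw d) Gs d.+1 (rcons s false) x + x * (2 ^ d * rf x d) =
                 2 * x * (2 ^ d * rf x.+1 d).
Proof.
rewrite -!sumG big_distrr -big_split big_distrr !big_seq; apply: eq_bigr => s.
by rewrite mem_allw => /eqP <-; rewrite /= G_W.
Qed.

Lemma sumH d x : \sum_(s <- allw d) Gs d.+2 (rcons (rcons s false) false) x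
   + x * \sum_(s <- allw d) Gs d.+1 (rcons s false) x =
   2 * x * \sum_(s <- allw d) Gs d.+1 (rcons s false) x.+1.
Proof.
rewrite !big_distrr -big_split !big_seq; apply: eq_bigr => s.
rewrite mem_allw => /eqP hs.
by have := G_W (rcons s false) x; rewrite size_rcons hs.
Qed.

Lemma card_typeB n : #|typeB n| = \sum_(s <- allw n) Gs n s 1.
Proof.
rewrite -sum1_card (eq_bigl (fun t : cand n => true && Pb (tval t.1) t.2)); last first.
  by move=> t; rewrite inE Pb_typeB.
rewrite -(pair_big_dep xpredT (fun (w : n.-tuple bool) f => Pb (tval w) f) (fun _ _ => 1)).
rewrite -(sum_tuples n (fun s => Gs n s 1)); apply: eq_bigr => w _.
by rewrite /Gs; apply: eq_bigr => f _; rewrite exp1n.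
Qed.

Lemma card_E n d : #|W n d.+2 :&: W n d.+1 :&: typeB n| = Hev n d 1.
Proof.
rewrite -sum1_card (eq_bigl (fun t : cand n =>
   (~~ nth false (tval t.1) d && ~~ nth false (tval t.1) d.+1) && Pb (tval t.1) t.2)); last first.
  move=> t; rewrite !inE Pb_typeB /=.
  by case: (nth false _ d); case: (nth false _ d.+1).
rewrite -(pair_big_dep (fun w : n.-tuple bool => ~~ nth false (tval w) d && ~~ nth false (tval w) d.+1)
   (fun (w : n.-tuple bool) f => Pb (tval w) f) (fun _ _ => 1)).
rewrite big_mkcond /Hev -(sum_tuples n (fun s => if ~~ nth false s d && ~~ nth false s d.+1 then Gs n s 1 else 0)).
apply: eq_bigr => w _; case: ifP => // _.
by rewrite /Gs; apply: eq_bigr => f _; rewrite exp1n.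
Qed.

Lemma rf_add t a b : rf t (a + b) = rf t a * rf (t + a) b.
Proof.
elim: b => [|b IH]; first by rewrite addn0 /rf big_ord0 muln1.
by rewrite addnS !rfSr IH addnA mulnA.
Qed.

Lemma rf_gt0 t n : 0 < t -> 0 < rf t n.
Proof.
move=> ht; rewrite /rf; elim/big_ind: _ => // [x y|i _].
  by rewrite muln_gt0 => -> ->.
by rewrite addn_gt0 ht.
Qed.

From mathcomp Require Import ring lra.
Unset Implicit Arguments.
Local Open Scope ring_scope.

Theorem mainTheorem10 (n k : nat) :
  (2 <= k)%N -> (k <= n)%N ->
  Pn (W n k :&: W n k.-1) =
    k%:R / n%:R - 3%:R / (2 * n)%:R
    + ((n - k + 1) ^ 2)%:R / (4 * n * (n - 1))%:R :> rat.
Proof.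
case: k => [|[|d]] // _ hkn.
have [m hn] : exists m, n = (d.+2 + m)%N by exists (n - d.+2)%N; lia.
rewrite /Pn -[(d.+2).-1]/(d.+1) card_E card_typeB.
subst n; rewrite Hev_iter Hev_base sumG.
set x := (1 + m)%N.
have e1 : (d.+2 + m - d.+2 + 1 = x)%N by rewrite /x; lia.
have e2 : (d.+2 + m - 1 = x + d)%N by rewrite /x; lia.
have e3 : (d.+2 + m = (x + d).+1)%N by rewrite /x; lia.
have hZ : rf 1 (d.+2 + m) = (rf 1 m * rf x d * (x + d) * (x + d).+1)%N.
  by rewrite addnC rf_add !rfSr -/x addnS !mulnA.
have hb : (rf x.+1 d * x = rf x d * (x + d))%N by rewrite mulnC -rfS rfSr.
have hc : (rf x.+2 d * x.+1 = rf x.+1 d * (x.+1 + d))%N by rewrite mulnC -rfS rfSr.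
have hY0 := sumY d x.
have hY1 := sumY d x.+1.
have hH := sumH d x.
have h2 : (2 ^ (d.+2 + m) = 2 ^ d * 4 * 2 ^ m)%N by rewrite expnD !expnS; lia.
have hx : (0 < x)%N by rewrite /x.
have hp : (0 < rf 1 m)%N by apply: rf_gt0.
have ha : (0 < rf x d)%N by apply: rf_gt0.
have hd2 : (0 < 2 ^ d)%N by rewrite expn_gt0.
have hm2 : (0 < 2 ^ m)%N by rewrite expn_gt0.
rewrite e1 e2 hZ h2 e3.
clear hkn.
move: hY0 hY1 hH hb hc hx hp ha hd2 hm2.
move: (\sum_(s <- allw d) Gs d.+2 (rcons (rcons s false) false) x) => H.
move: (\sum_(s <- allw d) Gs d.+1 (rcons s false) x) => Y0.
move: (\sum_(s <- allw d) Gs d.+1 (rcons s false) x.+1) => Y1.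
move: (rf 1 m) (rf x d) (rf x.+1 d) (rf x.+2 d) (2 ^ d)%N (2 ^ m)%N => p a b c P2d P2m.
clearbody x; clear e1 e2 e3 hZ h2.
move=> /(congr1 (fun z : nat => z%:R : rat)) E1 /(congr1 (fun z : nat => z%:R : rat)) E2
       /(congr1 (fun z : nat => z%:R : rat)) E3 /(congr1 (fun z : nat => z%:R : rat)) E4
       /(congr1 (fun z : nat => z%:R : rat)) E5.
move=> /lt0n_neq0 hx /lt0n_neq0 hp /lt0n_neq0 ha /lt0n_neq0 hd /lt0n_neq0 hm.
have Nx : x%:R != 0 :> rat by rewrite pnatr_eq0.
have Np : p%:R != 0 :> rat by rewrite pnatr_eq0.
have Na : a%:R != 0 :> rat by rewrite pnatr_eq0.
have Nd : P2d%:R != 0 :> rat by rewrite pnatr_eq0.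
have Nm : P2m%:R != 0 :> rat by rewrite pnatr_eq0.
move: E1 E2 E3 E4 E5; rewrite /= !(natrM, natrD, natrX) -?natr1.
rewrite !(natrM, natrD, natrX) -?natr1.
have px : 0 < x%:R :> rat by rewrite ltr0n lt0n.
have pd : 0 <= d%:R :> rat by rewrite ler0n.
move: (Y0%:R) (Y1%:R) (H%:R) (b%:R) (c%:R) => y0 y1 h B C.
move: Nx Np Na Nd Nm px pd.
move: (x%:R) (d%:R) (p%:R) (a%:R) (P2d%:R) (P2m%:R) => X D P A Pd Pm.
move=> Nx Np Na Nd Nm px pd E1 E2 E3 E4 E5.
have eY0 : y0 = 2 * X * (Pd * B) - X * (Pd * A).
  by apply: (addIr (X * (Pd * A))); rewrite E1; ring.
have eY1 : y1 = 2 * (X + 1) * (Pd * C) - (X + 1) * (Pd * B).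
  by apply: (addIr ((X + 1) * (Pd * B))); rewrite E2; ring.
have eH : h = 2 * X * y1 - X * y0.
  by apply: (addIr (X * y0)); rewrite E3; ring.
have eB : B = A * (X + D) / X.
  by apply: (mulIf Nx); rewrite E4; field.
have N1 : X + 1 != 0 by apply: lt0r_neq0; lra.
have N2 : X + D != 0 by apply: lt0r_neq0; lra.
have N3 : X + D + 1 != 0 by apply: lt0r_neq0; lra.
have N4 : X + 1 + D != 0 by apply: lt0r_neq0; lra.
have eC : C = B * (X + 1 + D) / (X + 1).
  by apply: (mulIf N1); rewrite E5; field.
rewrite eH eY1 eY0 eC eB.
field.
by rewrite N2 N3 Na Np Nm Nd Nx N1.
Qed.
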